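(* Let $A$ be a nonzero commutative nilpotent $\mathbb{F}_p$-algebra of finite dimension with $A^e\ne0$, $A^{e+1}=0$, let $t_r=\dim_{\mathbb{F}_p}(N_r/N_{r-1})$ for $1\le r\le e$, and let $t_M=\max_r t_r$. Then the number of ideals of $A$ is at least $p^{\lfloor t_M^2/4\rfloor}$.
   Context: Algebras are commutative, associative, not necessarily unital. $N_k=\{a\in A: x_1\cdots x_k a=0\ \forall x_1,\dots,x_k\in A\}$, $N_0=0$. *)

(* Defs.v *)
(* A finite-dimensional commutative associative (not
   necessarily unital) F_p-algebra of dimension n is modelled as the
   F_p-vector space 'rV['F_p]_n equipped with a bilinear, commutative,
   associative multiplication [mul]. *)
From HB Require Import structures.
From mathcomp Require Import all_boot all_order all_algebra.
Set Implicit Arguments. Unset Strict Implicit. Unset Printing Implicit Defensive.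
Import Order.TTheory GRing.Theory.
Local Open Scope ring_scope.

Section AlgDefs.
Variables (p n : nat).
Local Notation V := 'rV['F_p]_n.
Variable mul : V -> V -> V.

(* the algebra axioms: bilinear (left-linear + commutative), commutative, associative *)
Definition comm_assoc_algebra : Prop :=
  [/\ forall (c : 'F_p) (x y z : V), mul (c *: x + y) z = c *: mul x z + mul y z,
      forall x y : V, mul x y = mul y x
    & forall x y z : V, mul x (mul y z) = mul (mul x y) z].

Definition lprod (xs : seq V) (a : V) : V := foldr mul a xs.

Definition is_subspace (S : {set V}) : bool :=
  [&& (0 : V) \in S,
      [forall x in S, forall y in S, x + y \in S]
    & [forall c : 'F_p, forall x in S, c *: x \in S]].

Definition is_ideal (I : {set V}) : bool :=
  is_subspace I && [forall a : V, forall x in I, mul a x \in I].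

Definition ideals : {set {set V}} := [set I | is_ideal I].

(* N_k = { a | x1 ... xk a = 0 for all x1..xk }, so N_0 = 0 *)
Definition Nk (k : nat) : {set V} :=
  [set a | [forall xs : k.-tuple V, lprod xs a == 0]].

(* A^k = subspace spanned by all products of k elements (k >= 1) *)
Definition kprods (k : nat) : {set V} :=
  [set lprod xs x | x : V, xs : (k.-1).-tuple V].
Definition Apow (k : nat) : {set V} :=
  \bigcap_(S : {set V} | is_subspace S && (kprods k \subset S)) S.

(* F_p-dimension of a (finite) subspace S : #|S| = p ^ fdim S *)
Definition fdim (S : {set V}) : nat := logn p #|S|.

Definition tr (r : nat) : nat := (fdim (Nk r) - fdim (Nk r.-1))%N.

End AlgDefs.

(* Main.v *)
Require Import Defs.
From HB Require Import structures.
From mathcomp Require Import all_boot all_order all_algebra.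
From mathcomp Require Import zify.
Set Implicit Arguments. Unset Strict Implicit. Unset Printing Implicit Defensive.
Import GRing.Theory.
Local Open Scope ring_scope.

Lemma mulr_lin2 p n (mul : 'rV['F_p]_n -> 'rV['F_p]_n -> 'rV['F_p]_n) :
  comm_assoc_algebra mul -> forall c x y z, mul x (c *: y + z) = c *: mul x y + mul x z.
Proof. by case=> H1 H2 _ c x y z; rewrite H2 H1 !(H2 x). Qed.

Lemma mulr_x0 p n (mul : 'rV['F_p]_n -> 'rV['F_p]_n -> 'rV['F_p]_n) :
  comm_assoc_algebra mul -> forall x, mul x 0 = 0.
Proof.
move=> H x; have h := mulr_lin2 H 1 x 0 0.
rewrite !scale1r addr0 in h.
have: mul x 0 + mul x 0 = mul x 0 + 0 by rewrite addr0 -h.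
by move/addrI.
Qed.

Lemma lprod_lin p n (mul : 'rV['F_p]_n -> 'rV['F_p]_n -> 'rV['F_p]_n) :
  comm_assoc_algebra mul -> forall xs c a b,
  lprod mul xs (c *: a + b) = c *: lprod mul xs a + lprod mul xs b.
Proof.
move=> H; elim=> [//|x xs IH] c a b /=.
by rewrite IH mulr_lin2.
Qed.

Lemma lprod_0 p n (mul : 'rV['F_p]_n -> 'rV['F_p]_n -> 'rV['F_p]_n) :
  comm_assoc_algebra mul -> forall xs, lprod mul xs 0 = 0.
Proof. by move=> H; elim=> [//|x xs IH] /=; rewrite IH mulr_x0. Qed.

Definition closedS p n (S : {set 'rV['F_p]_n}) :=
  (0 \in S) /\ (forall c x y, x \in S -> y \in S -> c *: x + y \in S).

Lemma Nk_closed p n (mul : 'rV['F_p]_n -> 'rV['F_p]_n -> 'rV['F_p]_n) k :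
  comm_assoc_algebra mul -> closedS (Nk mul k).
Proof.
move=> H; split.
  by rewrite inE; apply/forallP => xs; rewrite lprod_0.
move=> c x y; rewrite !inE => /forallP hx /forallP hy; apply/forallP => xs.
by rewrite lprod_lin // (eqP (hx xs)) (eqP (hy xs)) scaler0 addr0.
Qed.

Lemma Nk_mul p n (mul : 'rV['F_p]_n -> 'rV['F_p]_n -> 'rV['F_p]_n) s a x :
  x \in Nk mul s.+1 -> mul a x \in Nk mul s.
Proof.
rewrite !inE => /forallP h; apply/forallP => xs.
have := h [tuple of rcons xs a].
by rewrite /lprod /= -cats1 foldr_cat.
Qed.

Lemma Nk_S p n (mul : 'rV['F_p]_n -> 'rV['F_p]_n -> 'rV['F_p]_n) s :
  comm_assoc_algebra mul -> Nk mul s \subset Nk mul s.+1.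
Proof.
move=> H; apply/subsetP => x; rewrite !inE => /forallP h; apply/forallP => xs.
rewrite (tuple_eta xs) /= (eqP (h (behead_tuple xs))).
by rewrite mulr_x0.
Qed.

Lemma closed_sum p n (S : {set 'rV['F_p]_n}) (I : finType) (F : I -> 'rV['F_p]_n) :
  closedS S -> (forall i, F i \in S) -> \sum_i F i \in S.
Proof.
move=> [h0 hc] hF; apply: (big_ind (fun x => x \in S)) => //.
by move=> x y hx hy; have := hc 1 x y hx hy; rewrite scale1r.
Qed.

Definition Bmat p n (S : {set 'rV['F_p]_n}) : 'M['F_p]_(#|S|, n) :=
  \matrix_(i < #|S|) (enum_val i).

Lemma memB p n (S : {set 'rV['F_p]_n}) x :
  closedS S -> (x <= Bmat S)%MS = (x \in S).
Proof.
move=> hS; apply/idP/idP.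
  case/submxP => D ->; rewrite mulmx_sum_row; apply: closed_sum => // i.
  rewrite rowK; case: hS => h0 hc; rewrite -[_ *: _]addr0; apply: hc => //.
  exact: enum_valP.
move=> xS; have := row_sub (enum_rank_in xS x) (Bmat S).
by rewrite rowK enum_rankK_in.
Qed.

Lemma card_rowspace p n m (B : 'M['F_p]_(m, n)) : prime p ->
  #|[set x : 'rV['F_p]_n | (x <= B)%MS]| = (p ^ \rank B)%N.
Proof.
move=> pp.
have -> : [set x : 'rV['F_p]_n | (x <= B)%MS] =
          [set v *m row_base B | v in [set: 'rV['F_p]_(\rank B)]].
  apply/setP => x; rewrite inE; apply/idP/imsetP.
    rewrite -(eq_row_base B) => /submxP [D ->]; by exists D; rewrite ?inE.
  by move=> [v _ ->]; rewrite -(eq_row_base B) submxMl.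
rewrite card_imset; last exact: row_free_inj (row_base_free B).
by rewrite cardsT card_mx card_Fp // mul1n.
Qed.

Lemma fdim_closed p n (S : {set 'rV['F_p]_n}) : prime p -> closedS S ->
  fdim S = \rank (Bmat S).
Proof.
move=> pp hS; rewrite /fdim.
have H : #|S| = (p ^ \rank (Bmat S))%N.
  rewrite -card_rowspace //; apply: eq_card => x.
  by rewrite inE memB.
by rewrite [X in logn p X]H pfactorK.
Qed.

Lemma count_ideals p n (mul : 'rV['F_p]_n -> 'rV['F_p]_n -> 'rV['F_p]_n) s m
  (P : 'M['F_p]_(m, n)) : prime p -> comm_assoc_algebra mul ->
  (forall w, w *m P \in Nk mul s.+1) ->
  (forall w, w *m P \in Nk mul s -> w = 0) ->
  forall k l, (k + l)%N = m -> (p ^ (k * l) <= #|ideals mul|)%N.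
Proof.
move=> pp H hP2 hP1 k l hm; subst m.
have [h0 hc] := Nk_closed s H.
have [h02 hc2] := Nk_closed s.+1 H.
pose I (M : 'M['F_p]_(k, l)) := [set u + v *m row_mx 1%:M M *m P |
   u in Nk mul s, v in [set: 'rV['F_p]_k]].
have hadd : forall x y, x \in Nk mul s -> y \in Nk mul s -> x + y \in Nk mul s.
  by move=> x y hx hy; have := hc 1 x y hx hy; rewrite scale1r.
have hsc : forall c x, x \in Nk mul s -> c *: x \in Nk mul s.
  by move=> c x hx; have := hc c x 0 hx h0; rewrite addr0.
have sub12 := Nk_S s H.
have hI2 : forall M x, x \in I M -> x \in Nk mul s.+1.
  move=> M x /imset2P [u v hu _ ->].
  have := hc2 1 u (v *m row_mx 1%:M M *m P) (subsetP sub12 _ hu) (hP2 _).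
  by rewrite scale1r.
have Iid : forall M, I M \in ideals mul.
  move=> M; rewrite inE /is_ideal /is_subspace; apply/andP; split.
    apply/and3P; split.
    - apply/imset2P; exists 0 0; [exact: h0 | exact: in_setT | by rewrite !mul0mx addr0].
    - apply/forallP => x; apply/implyP => /imset2P [u1 v1 hu1 _ ->].
      apply/forallP => y; apply/implyP => /imset2P [u2 v2 hu2 _ ->].
      apply/imset2P; exists (u1 + u2) (v1 + v2); [exact: hadd | exact: in_setT | by rewrite !mulmxDl addrACA].
    - apply/forallP => c; apply/forallP => x; apply/implyP => /imset2P [u v hu _ ->].
      apply/imset2P; exists (c *: u) (c *: v); [exact: hsc | exact: in_setT | by rewrite scalerDr !scalemxAl].
  apply/forallP => a; apply/forallP => x; apply/implyP => hx.
  apply/imset2P; exists (mul a x) 0; [exact: Nk_mul (hI2 _ _ hx) | exact: in_setT | by rewrite !mul0mx addr0].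
have Iinj : injective I.
  move=> M M' hMM; apply/row_matrixP => i; rewrite !rowE.
  set v := 'e_i.
  have : v *m row_mx 1%:M M *m P \in I M'.
    rewrite -hMM; apply/imset2P; exists 0 v; [exact: h0 | exact: in_setT | by rewrite add0r].
  case/imset2P => u v' hu _ e.
  have hu' : u = (v *m row_mx 1%:M M - v' *m row_mx 1%:M M') *m P.
    by rewrite mulmxBl e addrK.
  rewrite hu' in hu; move/hP1/eqP: hu; rewrite subr_eq0 => /eqP.
  rewrite !mul_mx_row !mulmx1 => /eq_row_mx [<- ->] //.
have -> : (p ^ (k * l))%N = #|[set I M | M in [set: 'M['F_p]_(k, l)]]|.
  by rewrite card_imset // cardsT card_mx card_Fp.
apply: subset_leq_card; apply/subsetP => J /imsetP [M _ ->]; exact: Iid.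
Qed.

Lemma arith m : (m ^ 2 %/ 4 <= m./2 * (m - m./2))%N.
Proof.
rewrite -divn2.
have h := divn_eq m 2. have h2 := ltn_pmod m (isT : 0 < 2)%N.
move: h h2; set q := (m %/ 2)%N; set r := (m %% 2)%N => h h2.
have [e | e] : r = 0%N \/ r = 1%N by lia.
  rewrite h e addn0 (_ : ((q * 2) ^ 2 = (q * (q * 2 - q)) * 4)%N) ?mulnK //; nia.
rewrite -ltnS ltn_divLR // h e; nia.
Qed.

Lemma per_r p n (mul : 'rV['F_p]_n -> 'rV['F_p]_n -> 'rV['F_p]_n) r :
  prime p -> comm_assoc_algebra mul -> (p ^ (tr mul r ^ 2 %/ 4) <= #|ideals mul|)%N.
Proof.
move=> pp H; case: r => [|s].
  rewrite /tr subnn.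
  have [h0 _] := Nk_closed 1 H.
  have := @count_ideals p n mul 0 0 0 pp H _ _ 0 0 erefl; apply.
    by move=> w; rewrite [w]thinmx0 mul0mx.
  by move=> w; rewrite [w]thinmx0.
have c1 := Nk_closed s H; have c2 := Nk_closed s.+1 H.
set B1 := Bmat (Nk mul s); set B2 := Bmat (Nk mul s.+1).
have hB12 : (B1 <= B2)%MS.
  apply/row_subP => i; rewrite memB //; have := row_sub i B1; rewrite memB // => h.
  exact: (subsetP (Nk_S s H)).
set D := (B2 :\: B1)%MS.
have htr : tr mul s.+1 = \rank D.
  rewrite /tr /= !fdim_closed // -/B1 -/B2.
  have := mxrank_cap_compl B2 B1; move/capmx_idPr: hB12 => E; rewrite E => <-.
  by rewrite addKn.
rewrite htr.
apply: leq_trans (leq_pexp2l (prime_gt0 pp) (arith _)) _.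
apply: (@count_ideals p n mul s _ (row_base D) pp H); last by rewrite subnKC // -divn2 leq_div.
  move=> w; rewrite -memB //; apply: (submx_trans (submxMl _ _)).
  rewrite eq_row_base; exact: diffmxSl.
move=> w; rewrite -memB // => h1.
have : (w *m row_base D <= D :&: B1)%MS.
  rewrite sub_capmx h1 andbT; apply: (submx_trans (submxMl _ _)).
  by rewrite eq_row_base.
rewrite capmx_diff submx0 => /eqP h.
apply: (row_free_inj (row_base_free D)); by rewrite h mul0mx.
Qed.

Theorem mainTheorem14 (p : nat) (p_pr : prime p) (n : nat) (n_gt0 : (0 < n)%N)
    (mul : 'rV['F_p]_n -> 'rV['F_p]_n -> 'rV['F_p]_n)
    (Halg : comm_assoc_algebra mul) (e : nat)
    (He : Apow mul e != [set 0]) (He1 : Apow mul e.+1 = [set 0]) :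
  (p ^ ((\max_(1 <= r < e.+1) tr mul r) ^ 2 %/ 4) <= #|ideals mul|)%N.
Proof.
apply: (big_ind (fun m => p ^ (m ^ 2 %/ 4) <= #|ideals mul|)%N).
- have := per_r 0 p_pr Halg; by rewrite /tr subnn.
- by move=> x y hx hy; case: (leqP x y).
- by move=> i _; apply: per_r.
Qed.
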